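(* Let $q$ be a prime power, $n$ a positive integer with $\gcd(q,n)=1$, $s\in\mathbb{Z}_n^*$ and $t\in\mathbb{Z}_n$ with $qt\equiv t\pmod n$. A $q$-coset $Q\subseteq\mathbb{Z}_n$ satisfies $\rho_{s,t}(Q)=Q$ if and only if there exist $k\in Q$ and an integer $j\ge0$ such that $(q^j-s)k\equiv st\pmod n$.
   Context: The $q$-cosets of $\mathbb{Z}_n$ are the orbits of $\mu_q:i\mapsto qi\bmod n$. $\rho_{s,t}:\mathbb{Z}_n\to\mathbb{Z}_n$, $i\mapsto s(i+t)\bmod n$; it maps $q$-cosets to $q$-cosets. *)

(* Defs.v *)
(* Z_n is modelled by the residues {0,...,n-1} in nat;
   subsets of Z_n are predicates on nat (nat -> Prop) contained in [0,n). *)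
From mathcomp Require Import all_boot all_order all_algebra.
Set Implicit Arguments. Unset Strict Implicit. Unset Printing Implicit Defensive.

Definition prime_power (q : nat) : Prop :=
  exists p e : nat, prime p /\ 0 < e /\ q = p ^ e.

Definition mu (q n i : nat) : nat := (q * i) %% n.

Definition qcoset_of (q n i : nat) : nat -> Prop :=
  fun x => exists j : nat, x = iter j (mu q n) i.

Definition is_qcoset (q n : nat) (Q : nat -> Prop) : Prop :=
  exists2 i, i < n & forall x, Q x <-> qcoset_of q n i x.

Definition rho (n s t i : nat) : nat := (s * (i + t)) %% n.

Definition image_set (f : nat -> nat) (Q : nat -> Prop) : nat -> Prop :=
  fun x => exists2 y, Q y & x = f y.

Definition set_eq (A B : nat -> Prop) : Prop := forall x, A x <-> B x.

(* Main.v *)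
Require Import Defs.
From mathcomp Require Import all_boot all_order all_algebra.
From mathcomp Require Import cyclic.

Lemma cong_add n a b c d : a = b %[mod n] -> c = d %[mod n] -> a + c = b + d %[mod n].
Proof. by move=> H1 H2; rewrite -modnDm H1 H2 modnDm. Qed.

Lemma cong_mul n a b c d : a = b %[mod n] -> c = d %[mod n] -> a * c = b * d %[mod n].
Proof. by move=> H1 H2; rewrite -modnMm H1 H2 modnMm. Qed.

Lemma iter_mu q n i j : i < n -> iter j (mu q n) i = q ^ j * i %% n.
Proof.
move=> hi; elim: j => [|j IH] /=; first by rewrite expn0 mul1n modn_small.
by rewrite IH /mu modnMmr expnS mulnA.
Qed.

Lemma pow_phi q n e m x : coprime q n ->
  q ^ (m + e * totient n) * x = q ^ m * x %[mod n].
Proof.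
move=> cq; rewrite expnD -mulnA; apply: cong_mul => //.
have H1 : q ^ (e * totient n) = 1 %[mod n].
  by rewrite mulnC expnM -modnXm (Euler_exp_totient cq) modnXm exp1n.
by rewrite -{2}[x]mul1n; apply: cong_mul.
Qed.

Lemma qt_pow q n t m : q * t = t %[mod n] -> q ^ m * t = t %[mod n].
Proof.
move=> h; elim: m => [|m IH]; first by rewrite mul1n.
by rewrite expnS -mulnA -modnMmr IH modnMmr h.
Qed.

Section IntNat.
Import GRing.Theory.
Local Open Scope ring_scope.
Lemma int_nat (n A B C D : nat) : ((A%:Z - B%:Z) * C%:Z = D%:Z %[mod n%:Z])%Z <-> (A * C = D + B * C %[mod n])%N.
Proof.
split.
  move/eqP; rewrite -(eqz_modDr (B%:Z * C%:Z)) mulrBl subrK -!PoszM -PoszD.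
  by move/eqP; rewrite !modz_nat; case.
move=> H; apply/eqP; rewrite -(eqz_modDr (B%:Z * C%:Z)) mulrBl subrK -!PoszM -PoszD.
by apply/eqP; rewrite !modz_nat H.
Qed.
End IntNat.

Theorem lemma3p2 (q n s t : nat) (Q : nat -> Prop) :
  prime_power q -> 0 < n -> coprime q n ->
  s < n -> coprime s n ->
  t < n -> q * t = t %[mod n] ->
  is_qcoset q n Q ->
  (set_eq (image_set (rho n s t) Q) Q <->
   exists k j : nat, Q k /\
     (((q ^ j)%:Z - s%:Z) * k%:Z = (s * t)%:Z %[mod n%:Z])%Z).
Proof.
move=> _ n0 cq sn cs tn hqt [i ilt HQ].
have phi0 : 0 < totient n by rewrite totient_gt0.
have Qi x : Q x <-> exists j, x = q ^ j * i %% n.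
  split=> [/HQ [j ->]|[j ->]]; first by exists j; rewrite iter_mu.
  by apply/HQ; exists j; rewrite iter_mu.
split.
  move=> Heq.
  have Qi0 : Q i by apply/Qi; exists 0; rewrite mul1n modn_small.
  have /Qi [j Hj] : Q (rho n s t i) by apply/(Heq _).1; exists i.
  exists i, j; split => //; apply/int_nat.
  by rewrite -Hj /rho mulnDr addnC.
move=> [k [j [Qk /int_nat Hkj]]].
have /Qi [a Ha] := Qk.
have Qk' x : Q x <-> exists e, x = q ^ e * k %% n.
  split=> [/Qi [m ->]|[e ->]]; last apply/Qi.
    exists (m + a * (totient n).-1).
    rewrite Ha modnMmr mulnA -expnD -addnA -mulnSr prednK //.
    by rewrite pow_phi.
  by exists (e + a); rewrite Ha modnMmr mulnA -expnD.
have Hr e : rho n s t (q ^ e * k %% n) = q ^ (e + j) * k %% n.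
  rewrite /rho -modnMmr modnDml modnMmr.
  transitivity (q ^ e * (s * t + s * k) %% n).
    rewrite !mulnDr addnC; apply: cong_add; last by rewrite mulnCA.
    by rewrite mulnCA; apply: cong_mul => //; apply/esym/qt_pow.
  by rewrite expnD -mulnA; apply: cong_mul => //; apply/esym.
move=> x; split.
  move=> [y /Qk' [m ->] ->]; apply/Qk'; exists (m + j); exact: Hr.
move=> /Qk' [m ->]; exists (q ^ (m + j * (totient n).-1) * k %% n).
  by apply/Qk'; exists (m + j * (totient n).-1).
rewrite Hr -addnA -mulnSr prednK //.
by rewrite pow_phi.
Qed.
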